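(* Let $N$ be a prime and $m$ a positive integer prime to $N$ with $m<N^2/4$. Then every non-cuspidal point in the support of the divisor $i_{\{1,2\}}^*\widetilde{C}_m$ on $X_{\mathrm{ns}}(N)$ is a Heegner point in the sense of Kohen--Pacetti.
   Context: Fix a non-square $\varepsilon\in\mathbb{F}_N$. Non-cuspidal points of $X_{\mathrm{ns}}(N)$ correspond to isomorphism classes of pairs $(E,\phi_\varepsilon)$ with $E$ an elliptic curve and $\phi_\varepsilon$ an endomorphism of $E[N]$ with $\phi_\varepsilon^2=\varepsilon$; $(E,\phi)\cong(E',\phi')$ if there is an isomorphism $\psi:E\to E'$ with $\psi\circ\phi=\phi'\circ\psi$ on $E[N]$. For $m$ prime to $N$, $X_{\mathrm{ns}}(N,m)$ parametrises triples $(E,\phi_\varepsilon,C)$ with $C\subset E$ cyclic of order $m$; the Hecke correspondence $\widetilde{C}_m\subset X_{\mathrm{ns}}(N)\times X_{\mathrm{ns}}(N)$ is the image of $X_{\mathrm{ns}}(N,m)$ under $(E,\phi_\varepsilon,C)\mapsto\big((E,\phi_\varepsilon),(E/C,\overline{\pi_C}\phi_\varepsilon\overline{\pi_C}^{-1})\big)$, with $\pi_C:E\to E/C$ and $\overline{\pi_C}$ its restriction to $E[N]$. $i_{\{1,2\}}$ is the diagonal embedding. $(E,\phi_\varepsilon)$ is a Heegner point (Kohen--Pacetti) if $\mathrm{End}(E)$ is an order of conductor prime to $N$ in an imaginary quadratic field and $\phi_\varepsilon$ is induced by an endomorphism of $E$. *)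

(* Defs.v *)
From Stdlib Require Import Reals ZArith Znumtheory.
From Coquelicot Require Import Coquelicot.

(* Complex-analytic model (over C) of elliptic curves: E = C / L for a lattice L.
   Sets are predicates [C -> Prop]. *)

Definition zc (k : Z) : C := RtoC (IZR k).

(* L is a lattice: Z w1 + Z w2 with w1, w2 R-linearly independent *)
Definition is_lattice (L : C -> Prop) : Prop :=
  exists w1 w2 : C,
    Im (Cmult w2 (Cconj w1)) <> 0%R /\
    forall z, L z <-> exists a b : Z, z = Cplus (Cmult (zc a) w1) (Cmult (zc b) w2).

(* congruence modulo L (equality in C/L) *)
Definition congr (L : C -> Prop) (z w : C) : Prop := L (Cminus z w).

(* z represents a point of E[N], E = C/L *)
Definition Ntors (L : C -> Prop) (N : Z) (z : C) : Prop := L (Cmult (zc N) z).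

(* phi : C -> C represents an endomorphism of the group E[N] (E = C/L) *)
Definition EndN (L : C -> Prop) (N : Z) (phi : C -> C) : Prop :=
  (forall z, Ntors L N z -> Ntors L N (phi z)) /\
  (forall z w, Ntors L N z -> Ntors L N w -> congr L z w -> congr L (phi z) (phi w)) /\
  (forall z w, Ntors L N z -> Ntors L N w ->
     congr L (phi (Cplus z w)) (Cplus (phi z) (phi w))).

Definition sq_eps (L : C -> Prop) (N eps : Z) (phi : C -> C) : Prop :=
  forall z, Ntors L N z -> congr L (phi (phi z)) (Cmult (zc eps) z).

(* a non-cuspidal point of X_ns(N) represented by (E = C/L, phi_eps) *)
Definition ns_pair (L : C -> Prop) (N eps : Z) (phi : C -> C) : Prop :=
  is_lattice L /\ EndN L N phi /\ sq_eps L N eps phi.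

(* (C/L1, phi1) ≅ (C/L2, phi2): an isomorphism C/L1 -> C/L2 is z |-> u z with u L1 = L2 *)
Definition iso_pair (L1 : C -> Prop) (phi1 : C -> C) (L2 : C -> Prop) (phi2 : C -> C)
  (N : Z) : Prop :=
  exists u : C, u <> RtoC 0%R /\
    (forall z, L1 z <-> L2 (Cmult u z)) /\
    (forall z, Ntors L1 N z -> congr L2 (Cmult u (phi1 z)) (phi2 (Cmult u z))).

(* A cyclic subgroup C of order m of C/L, described by its preimage L' in C,
   so that E/C = C/L' and pi_C is induced by the identity of C. *)
Definition cyclic_over (L L' : C -> Prop) (m : Z) : Prop :=
  (forall z, L z -> L' z) /\
  exists g : C,
    (forall z, L' z <-> exists (k : Z) (l : C), L l /\ z = Cplus l (Cmult (zc k) g)) /\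
    (forall k : Z, L (Cmult (zc k) g) <-> (m | k)%Z).

(* (E, phi) with E = C/L lies in the support of i_{1,2}^* C~_m:
   there is C cyclic of order m with (E/C, pi_C phi pi_C^{-1}) ≅ (E, phi).
   The transported structure phi' on (E/C)[N] is characterised by
   phi' o pi_C = pi_C o phi on E[N]. *)
Definition in_support_diag_Hecke (L : C -> Prop) (N m : Z) (phi : C -> C) : Prop :=
  exists (L' : C -> Prop) (phi' : C -> C),
    is_lattice L' /\ cyclic_over L L' m /\ EndN L' N phi' /\
    (forall z, Ntors L N z -> congr L' (phi' z) (phi z)) /\
    iso_pair L' phi' L phi N.

Definition End_lat (L : C -> Prop) (a : C) : Prop :=
  forall z, L z -> L (Cmult a z).

Definition squarefreeZ (k : Z) : Prop :=
  forall p : Z, (p * p | k)%Z -> p = 1%Z \/ p = (-1)%Z.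

Definition fundamental_disc (d : Z) : Prop :=
  (d mod 4 = 1 /\ squarefreeZ d)%Z \/
  (exists k : Z, d = (4 * k)%Z /\ ((k mod 4 = 2)%Z \/ (k mod 4 = 3)%Z) /\ squarefreeZ k).

(* O is an order in an imaginary quadratic field K, of conductor f:
   O = Z[tau] with tau non-real, tau^2 - t tau + n = 0, and
   disc(O) = t^2 - 4n = f^2 d_K with d_K the fundamental discriminant of K. *)
Definition imag_quad_order_of_conductor (O : C -> Prop) (f : Z) : Prop :=
  (0 < f)%Z /\
  exists (tau : C) (t n d : Z),
    Im tau <> 0%R /\
    Cmult tau tau = Cminus (Cmult (zc t) tau) (zc n) /\
    (forall z, O z <-> exists a b : Z, z = Cplus (zc a) (Cmult (zc b) tau)) /\
    (t * t - 4 * n = f * f * d)%Z /\ fundamental_disc d.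

Definition heegner (L : C -> Prop) (N : Z) (phi : C -> C) : Prop :=
  (exists f : Z, Z.gcd f N = 1%Z /\ imag_quad_order_of_conductor (End_lat L) f) /\
  exists alpha : C, End_lat L alpha /\
    forall z, Ntors L N z -> congr L (phi z) (Cmult alpha z).

Definition nonsquare_mod (eps N : Z) : Prop :=
  ~ exists x : Z, ((x * x - eps) mod N = 0)%Z.

(* Main.v *)
Require Import Defs.
From Stdlib Require Import Reals ZArith Znumtheory Lra Lia Psatz Classical.
From Coquelicot Require Import Coquelicot.

Lemma zc_add a b : zc (a + b) = Cplus (zc a) (zc b).
Proof. unfold zc. rewrite plus_IZR. now rewrite RtoC_plus. Qed.
Lemma zc_mul a b : zc (a * b) = Cmult (zc a) (zc b).
Proof. unfold zc. rewrite mult_IZR. now rewrite RtoC_mult. Qed.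
Lemma zc_opp a : zc (- a) = Copp (zc a).
Proof. unfold zc. rewrite opp_IZR. now rewrite RtoC_opp. Qed.
Lemma zc_sub a b : zc (a - b) = Cminus (zc a) (zc b).
Proof. unfold zc. rewrite minus_IZR. now rewrite RtoC_minus. Qed.
Lemma zc0 : zc 0 = RtoC 0. Proof. reflexivity. Qed.
Lemma zc1 : zc 1 = RtoC 1. Proof. reflexivity. Qed.

Ltac zcs := repeat (rewrite ?zc_add, ?zc_mul, ?zc_opp, ?zc_sub).

Definition LB (L : C -> Prop) (w1 w2 : C) : Prop :=
  forall z, L z <-> exists a b : Z, z = Cplus (Cmult (zc a) w1) (Cmult (zc b) w2).

Lemma coord_uniqR (w1 w2 : C) (r1 r2 s1 s2 : R) :
  Im (Cmult w2 (Cconj w1)) <> 0%R ->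
  Cplus (Cmult (RtoC r1) w1) (Cmult (RtoC r2) w2) =
  Cplus (Cmult (RtoC s1) w1) (Cmult (RtoC s2) w2) -> r1 = s1 /\ r2 = s2.
Proof.
  destruct w1 as [x1 y1], w2 as [x2 y2]. unfold Cmult, Cplus, Cconj, RtoC, Im; simpl.
  intros HD E. injection E as E1 E2.

  assert (E1': ((r1-s1)*x1 + (r2-s2)*x2 = 0)%R) by lra.
  assert (E2': ((r1-s1)*y1 + (r2-s2)*y2 = 0)%R) by lra.
  assert (HA: ((r1 - s1) * (x1*y2 - x2*y1) = 0)%R).
  { replace ((r1 - s1) * (x1*y2 - x2*y1))%R with (y2 * ((r1-s1)*x1 + (r2-s2)*x2) - x2*((r1-s1)*y1 + (r2-s2)*y2))%R by ring.
    rewrite E1', E2'. ring. }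
  assert (HB: ((r2 - s2) * (x1*y2 - x2*y1) = 0)%R).
  { replace ((r2 - s2) * (x1*y2 - x2*y1))%R with (x1 * ((r1-s1)*y1 + (r2-s2)*y2) - y1*((r1-s1)*x1 + (r2-s2)*x2))%R by ring.
    rewrite E1', E2'. ring. }
  assert (HD': (x1*y2 - x2*y1 <> 0)%R) by (intro; apply HD; lra).
  split.
  - apply Rmult_integral in HA. destruct HA as [HA|HA]; [lra|contradiction].
  - apply Rmult_integral in HB. destruct HB as [HB|HB]; [lra|contradiction].
Qed.

Lemma coord_uniqZ w1 w2 a b c d : Im (Cmult w2 (Cconj w1)) <> 0%R ->
  Cplus (Cmult (zc a) w1) (Cmult (zc b) w2) = Cplus (Cmult (zc c) w1) (Cmult (zc d) w2) ->
  a = c /\ b = d.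
Proof. intros HD E. destruct (coord_uniqR w1 w2 _ _ _ _ HD E). split; apply eq_IZR; auto. Qed.

Section Lat.
Lemma LB_lin L w1 w2 a b : LB L w1 w2 -> L (Cplus (Cmult (zc a) w1) (Cmult (zc b) w2)).
Proof. intros H. apply H. eauto. Qed.
Lemma LB_0 L w1 w2 : LB L w1 w2 -> L (RtoC 0).
Proof. intros H. apply H. exists 0%Z, 0%Z. rewrite zc0. ring. Qed.
Lemma LB_w1 L w1 w2 : LB L w1 w2 -> L w1.
Proof. intros H. apply H. exists 1%Z, 0%Z. rewrite zc0, zc1. ring. Qed.
Lemma LB_w2 L w1 w2 : LB L w1 w2 -> L w2.
Proof. intros H. apply H. exists 0%Z, 1%Z. rewrite zc0, zc1. ring. Qed.
Lemma LB_add L w1 w2 z w : LB L w1 w2 -> L z -> L w -> L (Cplus z w).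
Proof. intros H Hz Hw. apply H in Hz as [a [b ->]]. apply H in Hw as [c [d ->]].
  apply H. exists (a+c)%Z, (b+d)%Z. zcs. ring. Qed.
Lemma LB_opp L w1 w2 z : LB L w1 w2 -> L z -> L (Copp z).
Proof. intros H Hz. apply H in Hz as [a [b ->]].
  apply H. exists (-a)%Z, (-b)%Z. zcs. ring. Qed.
Lemma LB_sub L w1 w2 z w : LB L w1 w2 -> L z -> L w -> L (Cminus z w).
Proof. intros H Hz Hw. apply (LB_add L w1 w2); auto. now apply (LB_opp L w1 w2). Qed.
Lemma LB_zmul L w1 w2 k z : LB L w1 w2 -> L z -> L (Cmult (zc k) z).
Proof. intros H Hz. apply H in Hz as [a [b ->]].
  apply H. exists (k*a)%Z, (k*b)%Z. zcs. ring. Qed.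
Lemma LB_eq (L : C -> Prop) (z w : C) : z = w -> L z -> L w.
Proof. intros ->; auto. Qed.

Lemma cg_refl L w1 w2 z : LB L w1 w2 -> congr L z z.
Proof. intros H. unfold congr. replace (Cminus z z) with (RtoC 0) by ring. eapply LB_0; eauto. Qed.
Lemma cg_sym L w1 w2 z w : LB L w1 w2 -> congr L z w -> congr L w z.
Proof. unfold congr. intros H Hz. replace (Cminus w z) with (Copp (Cminus z w)) by ring.
  eapply LB_opp; eauto. Qed.
Lemma cg_trans L w1 w2 x y z : LB L w1 w2 -> congr L x y -> congr L y z -> congr L x z.
Proof. unfold congr. intros H H1 H2. replace (Cminus x z) with (Cplus (Cminus x y) (Cminus y z)) by ring.
  eapply LB_add; eauto. Qed.
Lemma cg_add L w1 w2 x y x' y' : LB L w1 w2 -> congr L x x' -> congr L y y' ->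
  congr L (Cplus x y) (Cplus x' y').
Proof. unfold congr. intros H H1 H2. replace (Cminus (Cplus x y) (Cplus x' y')) with (Cplus (Cminus x x') (Cminus y y')) by ring.
  eapply LB_add; eauto. Qed.
Lemma cg_zmul L w1 w2 k x y : LB L w1 w2 -> congr L x y -> congr L (Cmult (zc k) x) (Cmult (zc k) y).
Proof. unfold congr. intros H H1. replace (Cminus (Cmult (zc k) x) (Cmult (zc k) y)) with (Cmult (zc k) (Cminus x y)) by ring.
  eapply LB_zmul; eauto. Qed.
Lemma cg_end L a x y : End_lat L a -> congr L x y -> congr L (Cmult a x) (Cmult a y).
Proof. unfold congr. intros H H1. replace (Cminus (Cmult a x) (Cmult a y)) with (Cmult a (Cminus x y)) by ring.
  auto. Qed.
Lemma cg_eq L w1 w2 x y : LB L w1 w2 -> x = y -> congr L x y.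
Proof. intros H ->. eapply cg_refl; eauto. Qed.

Lemma End_zc L w1 w2 k : LB L w1 w2 -> End_lat L (zc k).
Proof. intros H z Hz. eapply LB_zmul; eauto. Qed.
Lemma End_add L w1 w2 a b : LB L w1 w2 -> End_lat L a -> End_lat L b -> End_lat L (Cplus a b).
Proof. intros H Ha Hb z Hz. replace (Cmult (Cplus a b) z) with (Cplus (Cmult a z) (Cmult b z)) by ring.
  eapply LB_add; eauto. Qed.
Lemma End_sub L w1 w2 a b : LB L w1 w2 -> End_lat L a -> End_lat L b -> End_lat L (Cminus a b).
Proof. intros H Ha Hb z Hz. replace (Cmult (Cminus a b) z) with (Cminus (Cmult a z) (Cmult b z)) by ring.
  eapply LB_sub; eauto. Qed.
Lemma End_mul L a b : End_lat L a -> End_lat L b -> End_lat L (Cmult a b).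
Proof. intros Ha Hb z Hz. replace (Cmult (Cmult a b) z) with (Cmult a (Cmult b z)) by ring. auto. Qed.
Lemma End_of_basis L w1 w2 a : LB L w1 w2 -> L (Cmult a w1) -> L (Cmult a w2) -> End_lat L a.
Proof. intros H H1 H2 z Hz. apply H in Hz as [c [d ->]].
  replace (Cmult a (Cplus (Cmult (zc c) w1) (Cmult (zc d) w2))) with
    (Cplus (Cmult (zc c) (Cmult a w1)) (Cmult (zc d) (Cmult a w2))) by ring.
  eapply LB_add; eauto; eapply LB_zmul; eauto. Qed.

Lemma Ntors_L L w1 w2 N z : LB L w1 w2 -> L z -> Ntors L N z.
Proof. intros H Hz. unfold Ntors. eapply LB_zmul; eauto. Qed.
Lemma Ntors_add L w1 w2 N z w : LB L w1 w2 -> Ntors L N z -> Ntors L N w -> Ntors L N (Cplus z w).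
Proof. unfold Ntors. intros H H1 H2. replace (Cmult (zc N) (Cplus z w)) with (Cplus (Cmult (zc N) z) (Cmult (zc N) w)) by ring.
  eapply LB_add; eauto. Qed.
Lemma Ntors_zmul L w1 w2 N k z : LB L w1 w2 -> Ntors L N z -> Ntors L N (Cmult (zc k) z).
Proof. unfold Ntors. intros H H1. replace (Cmult (zc N) (Cmult (zc k) z)) with (Cmult (zc k) (Cmult (zc N) z)) by ring.
  eapply LB_zmul; eauto. Qed.
Lemma Ntors_end L N a z : End_lat L a -> Ntors L N z -> Ntors L N (Cmult a z).
Proof. unfold Ntors. intros H H1. replace (Cmult (zc N) (Cmult a z)) with (Cmult a (Cmult (zc N) z)) by ring. auto. Qed.
End Lat.

Lemma phi_L0 L w1 w2 N phi x : LB L w1 w2 -> EndN L N phi -> L x -> congr L (phi x) (RtoC 0).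
Proof.
  intros H [Hm [Hw Ha]] Hx.
  assert (Tx : Ntors L N x) by (eapply Ntors_L; eauto).
  assert (Txx : Ntors L N (Cplus x x)) by (eapply Ntors_add; eauto).
  assert (C1 : congr L (phi (Cplus x x)) (phi x)).
  { apply Hw; auto. unfold congr. eapply LB_eq; [|exact Hx]. ring. }
  pose proof (Ha x x Tx Tx) as C2.
  pose proof (cg_trans _ _ _ _ _ _ H (cg_sym _ _ _ _ _ H C2) C1) as C3.
  unfold congr in *. eapply LB_eq; [|exact C3]. ring.
Qed.

Lemma phi_zmul_nat L w1 w2 N phi z (n : nat) : LB L w1 w2 -> EndN L N phi -> Ntors L N z ->
  congr L (phi (Cmult (zc (Z.of_nat n)) z)) (Cmult (zc (Z.of_nat n)) (phi z)).
Proof.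
  intros H HE Hz. induction n as [|n IH].
  - change (Z.of_nat 0) with 0%Z. replace (Cmult (zc 0) (phi z)) with (RtoC 0) by (rewrite zc0; ring).
    apply (phi_L0 L w1 w2 N phi); auto. apply (LB_eq L (RtoC 0)); [rewrite zc0; ring| apply (LB_0 L w1 w2 H)].
  - assert (E : forall y, Cmult (zc (Z.of_nat (S n))) y = Cplus (Cmult (zc (Z.of_nat n)) y) y).
    { intros y. rewrite Nat2Z.inj_succ, <- Z.add_1_r. zcs. rewrite zc1. ring. }
    rewrite !E. destruct HE as [Hm [Hw Ha]].
    eapply cg_trans; [exact H| apply Ha |].
    + eapply Ntors_zmul; eauto.
    + exact Hz.
    + eapply cg_add; eauto. eapply cg_refl; eauto.
Qed.

Lemma phi_zmul L w1 w2 N phi z (k : Z) : LB L w1 w2 -> EndN L N phi -> Ntors L N z ->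
  congr L (phi (Cmult (zc k) z)) (Cmult (zc k) (phi z)).
Proof.
  intros H HE Hz. destruct (Z_le_gt_dec 0 k) as [Hk|Hk].
  - rewrite <- (Z2Nat.id k Hk). eapply phi_zmul_nat; eauto.
  - assert (Hk' : (0 <= - k)%Z) by lia.
    pose proof (phi_zmul_nat L w1 w2 N phi z (Z.to_nat (-k)) H HE Hz) as C1.
    rewrite (Z2Nat.id _ Hk') in C1.
    destruct HE as [Hm [Hw Ha]].
    assert (T1 : Ntors L N (Cmult (zc k) z)) by (eapply Ntors_zmul; eauto).
    assert (T2 : Ntors L N (Cmult (zc (-k)) z)) by (eapply Ntors_zmul; eauto).
    pose proof (Ha _ _ T1 T2) as C2.
    assert (C3 : congr L (phi (Cplus (Cmult (zc k) z) (Cmult (zc (- k)) z))) (RtoC 0)).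
    { apply (phi_L0 L w1 w2 N phi); [auto|split; auto|]. apply (LB_eq L (RtoC 0)); [zcs; ring| apply (LB_0 L w1 w2 H)]. }
    pose proof (cg_trans _ _ _ _ _ _ H (cg_sym _ _ _ _ _ H C2) C3) as C4.
    unfold congr in *.
    apply (LB_eq L (Cminus (Cminus (Cplus (phi (Cmult (zc k) z)) (phi (Cmult (zc (-k)) z))) (RtoC 0))
                           (Cminus (phi (Cmult (zc (-k)) z)) (Cmult (zc (-k)) (phi z))))).
    + zcs. ring.
    + apply (LB_sub L w1 w2); auto.
Qed.

Lemma phi_lin2 L w1 w2 N phi z1 z2 (p q : Z) : LB L w1 w2 -> EndN L N phi -> Ntors L N z1 -> Ntors L N z2 ->
  congr L (phi (Cplus (Cmult (zc p) z1) (Cmult (zc q) z2)))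
          (Cplus (Cmult (zc p) (phi z1)) (Cmult (zc q) (phi z2))).
Proof.
  intros H HE H1 H2. pose proof HE as [Hm [Hw Ha]].
  eapply cg_trans; [exact H| apply Ha|].
  - eapply Ntors_zmul; eauto.
  - eapply Ntors_zmul; eauto.
  - eapply cg_add; eauto; eapply phi_zmul; eauto.
Qed.

Lemma Zmin_exists (P : Z -> Prop) : (exists k, 0 < k /\ P k)%Z ->
  exists k0, (0 < k0)%Z /\ P k0 /\ forall k, (0 < k)%Z -> P k -> (k0 <= k)%Z.
Proof.
  intros [k [Hk Pk]].
  assert (H : forall x, (0 <= x)%Z -> (0 < x)%Z -> P x ->
     exists k0, (0 < k0)%Z /\ P k0 /\ forall k, (0 < k)%Z -> P k -> (k0 <= k)%Z).
  { intros x Hx. pattern x. apply Z_lt_induction; [|exact Hx]. clear x Hx.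
    intros x IH Hx Px.
    destruct (classic (exists y, (0 < y < x)%Z /\ P y)) as [[y [Hy Py]]|Hn].
    - apply (IH y); [lia|lia|exact Py].
    - exists x. split; [exact Hx|split; [exact Px|]].
      intros k' Hk' Pk'. destruct (Z_le_gt_dec x k') as [h|h]; [exact h|].
      exfalso. apply Hn. exists k'. split; [lia|exact Pk']. }
  apply (H k); auto; lia.
Qed.

Lemma w1_nz w1 w2 : Im (Cmult w2 (Cconj w1)) <> 0%R -> w1 <> RtoC 0.
Proof. intros HD E. subst w1. apply HD. destruct w2. unfold Cmult, Cconj, RtoC, Im; simpl. ring. Qed.

Lemma mul_cancel (x y w : C) : w <> RtoC 0 -> Cmult x w = Cmult y w -> x = y.
Proof. intros Hw E.
  replace x with (Cmult (Cmult x w) (Cinv w)) by (field; auto).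
  rewrite E. field; auto. Qed.

Lemma real_of_Im0 (x : C) : Im x = 0%R -> x = RtoC (Re x).
Proof. destruct x as [a b]. unfold Im, Re, RtoC; simpl. intros ->. reflexivity. Qed.

Lemma end_structure L w1 w2 u : Im (Cmult w2 (Cconj w1)) <> 0%R -> LB L w1 w2 ->
  End_lat L u -> Im u <> 0%R ->
  exists tau t n, Im tau <> 0%R /\ Cmult tau tau = Cminus (Cmult (zc t) tau) (zc n) /\
    (forall z, End_lat L z <-> exists a b : Z, z = Cplus (zc a) (Cmult (zc b) tau)).
Proof.
  intros HD H Hu Hiu.
  pose proof (w1_nz _ _ HD) as Hw1.
  set (P := fun k => exists v a, End_lat L v /\ Cmult v w1 = Cplus (Cmult (zc a) w1) (Cmult (zc k) w2)).
  assert (Hint : forall v a, Cmult v w1 = Cplus (Cmult (zc a) w1) (Cmult (zc 0) w2) -> v = zc a).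
  { intros v a E. apply (mul_cancel _ _ w1 Hw1). rewrite E, zc0. ring. }
  assert (Pex : exists k, (0 < k)%Z /\ P k).
  { destruct (proj1 (H _) (Hu w1 (LB_w1 _ _ _ H))) as [a [b Eb]].
    destruct (Z.lt_trichotomy b 0) as [hb|[hb|hb]].
    - exists (-b)%Z. split; [lia|]. exists (Cminus (zc 0) u), (-a)%Z. split.
      + apply (End_sub L w1 w2); auto. eapply End_zc; eauto.
      + replace (Cmult (Cminus (zc 0) u) w1) with (Copp (Cmult u w1)) by (rewrite zc0; ring).
        rewrite Eb. zcs. ring.
    - subst b. exfalso. apply Hiu. rewrite (Hint u a Eb). reflexivity.
    - exists b. split; [lia|]. exists u, a. auto. }
  destruct (Zmin_exists P Pex) as [k0 [Hk0 [[tau [a0 [Htau Etau]]] Hmin]]].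
  assert (Hchar : forall z, End_lat L z <-> exists a b : Z, z = Cplus (zc a) (Cmult (zc b) tau)).
  { intros z. split.
    - intros Hz. destruct (proj1 (H _) (Hz w1 (LB_w1 _ _ _ H))) as [a [k Ek]].
      pose proof (Z.div_mod k k0 ltac:(lia)) as Ediv.
      pose proof (Z.mod_pos_bound k k0 Hk0) as Hr.
      set (q := (k / k0)%Z) in *. set (r := (k mod k0)%Z) in *.
      assert (Ev : Cmult (Cminus z (Cmult (zc q) tau)) w1 =
                   Cplus (Cmult (zc (a - q * a0)) w1) (Cmult (zc r) w2)).
      { replace (Cmult (Cminus z (Cmult (zc q) tau)) w1) with
          (Cminus (Cmult z w1) (Cmult (zc q) (Cmult tau w1))) by ring.
        rewrite Ek, Etau. replace r with (k - k0 * q)%Z by lia. zcs. ring. }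
      assert (Hv : End_lat L (Cminus z (Cmult (zc q) tau))).
      { apply (End_sub L w1 w2); auto. apply End_mul; auto. eapply End_zc; eauto. }
      destruct (Z.eq_dec r 0) as [Hr0|Hr0].
      + rewrite Hr0 in Ev. pose proof (Hint _ _ Ev) as Ez.
        exists (a - q * a0)%Z, q. rewrite <- Ez. ring.
      + exfalso. assert (k0 <= r)%Z.
        { apply Hmin; [lia|]. exists (Cminus z (Cmult (zc q) tau)), (a - q * a0)%Z. auto. }
        lia.
    - intros [a [b ->]]. apply (End_add L w1 w2); auto.
      + eapply End_zc; eauto.
      + apply End_mul; auto. eapply End_zc; eauto. }
  assert (Hitau : Im tau <> 0%R).
  { intros Hi. pose proof (real_of_Im0 _ Hi) as Er.
    assert (E2 : Cplus (Cmult (RtoC (Re tau)) w1) (Cmult (RtoC 0) w2) =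
                 Cplus (Cmult (RtoC (IZR a0)) w1) (Cmult (RtoC (IZR k0)) w2)).
    { rewrite <- Er. unfold zc in Etau. rewrite <- Etau. ring. }
    destruct (coord_uniqR _ _ _ _ _ _ HD E2) as [_ E3].
    apply eq_IZR in E3. lia. }
  destruct (proj1 (Hchar (Cmult tau tau)) (End_mul L tau tau Htau Htau)) as [a [b Eab]].
  exists tau, b, (-a)%Z. split; [exact Hitau|split; [|exact Hchar]].
  rewrite Eab. zcs. ring.
Qed.

Definition frm (z w : C) : R := Im (Cmult w (Cconj z)).

Lemma frm_lat w1 w2 A B C' D : frm (Cplus (Cmult (zc A) w1) (Cmult (zc B) w2)) (Cplus (Cmult (zc C') w1) (Cmult (zc D) w2))
  = (IZR (A * D - B * C') * Im (Cmult w2 (Cconj w1)))%R.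
Proof. destruct w1 as [x1 y1], w2 as [x2 y2]. unfold frm, zc, Cmult, Cplus, Cconj, RtoC, Im; simpl.
  rewrite minus_IZR, !mult_IZR. ring. Qed.

Lemma frm_scale u z w : frm (Cmult u z) (Cmult u w) = ((Re u * Re u + Im u * Im u) * frm z w)%R.
Proof. destruct u as [a b], z as [c d], w as [e f]. unfold frm, Cmult, Cconj, Re, Im; simpl. ring. Qed.

Lemma norm_bound L w1 w2 L' (g u : C) (m : Z) :
  Im (Cmult w2 (Cconj w1)) <> 0%R -> LB L w1 w2 ->
  (forall z, L' z <-> exists (k : Z) (l : C), L l /\ z = Cplus l (Cmult (zc k) g)) ->
  L (Cmult (zc m) g) -> (0 < m)%Z -> u <> RtoC 0 ->
  (forall z, L' z <-> L (Cmult u z)) ->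
  (Re u * Re u + Im u * Im u <= IZR m)%R.
Proof.
  intros HD H HL' Hmg Hm Hu Hiso.
  set (s := (Re u * Re u + Im u * Im u)%R).
  assert (Hs : (0 < s)%R).
  { destruct (Rle_lt_dec s 0) as [h|h]; [|exact h]. exfalso. apply Hu.
    destruct u as [a b]. unfold s, Re, Im in *; simpl in *.
    assert (a = 0)%R by nra. assert (b = 0)%R by nra. subst. reflexivity. }
  assert (HL1 : L' (Cmult w1 (Cinv u))).
  { apply Hiso. apply (LB_eq L w1); [field; auto| eapply LB_w1; eauto]. }
  assert (HL2 : L' (Cmult w2 (Cinv u))).
  { apply Hiso. apply (LB_eq L w2); [field; auto| eapply LB_w2; eauto]. }
  destruct (proj1 (HL' _) HL1) as [k1 [l1 [Hl1 E1]]].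
  destruct (proj1 (HL' _) HL2) as [k2 [l2 [Hl2 E2]]].
  destruct (proj1 (H _) Hl1) as [a1 [b1 El1]].
  destruct (proj1 (H _) Hl2) as [a2 [b2 El2]].
  destruct (proj1 (H _) Hmg) as [a0 [b0 Emg]].
  assert (X1 : Cmult (zc m) w1 = Cmult u (Cplus (Cmult (zc (m*a1 + k1*a0)) w1) (Cmult (zc (m*b1+k1*b0)) w2))).
  { transitivity (Cmult u (Cmult (zc m) (Cmult w1 (Cinv u)))); [field; auto|].
    rewrite E1, El1.
    replace (Cmult (zc m) (Cplus (Cplus (Cmult (zc a1) w1) (Cmult (zc b1) w2)) (Cmult (zc k1) g))) with
      (Cplus (Cmult (zc m) (Cplus (Cmult (zc a1) w1) (Cmult (zc b1) w2))) (Cmult (zc k1) (Cmult (zc m) g))) by ring.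
    rewrite Emg. zcs. ring. }
  assert (X2 : Cmult (zc m) w2 = Cmult u (Cplus (Cmult (zc (m*a2 + k2*a0)) w1) (Cmult (zc (m*b2+k2*b0)) w2))).
  { transitivity (Cmult u (Cmult (zc m) (Cmult w2 (Cinv u)))); [field; auto|].
    rewrite E2, El2.
    replace (Cmult (zc m) (Cplus (Cplus (Cmult (zc a2) w1) (Cmult (zc b2) w2)) (Cmult (zc k2) g))) with
      (Cplus (Cmult (zc m) (Cplus (Cmult (zc a2) w1) (Cmult (zc b2) w2))) (Cmult (zc k2) (Cmult (zc m) g))) by ring.
    rewrite Emg. zcs. ring. }
  pose proof (f_equal2 frm X1 X2) as F. rewrite (frm_scale u), frm_lat in F.
  replace (Cmult (zc m) w1) with (Cplus (Cmult (zc m) w1) (Cmult (zc 0) w2)) in F by (rewrite zc0; ring).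
  replace (Cmult (zc m) w2) with (Cplus (Cmult (zc 0) w1) (Cmult (zc m) w2)) in F by (rewrite zc0; ring).
  rewrite frm_lat in F. fold s in F.
  set (K := (m * (a1 * b2 - b1 * a2) + (a1 * k2 * b0 + k1 * a0 * b2 - b1 * k2 * a0 - k1 * b0 * a2))%Z).
  replace ((m * a1 + k1 * a0) * (m * b2 + k2 * b0) - (m * b1 + k1 * b0) * (m * a2 + k2 * a0))%Z
    with (m * K)%Z in F by (unfold K; ring).
  replace (m * m - 0 * 0)%Z with (m * m)%Z in F by ring.
  rewrite !mult_IZR in F.
  set (D := Im (Cmult w2 (Cconj w1))) in *.
  assert (Hmr : (0 < IZR m)%R) by (apply IZR_lt; lia).
  assert (E : (IZR m * D * (IZR m - s * IZR K) = 0)%R) by (rewrite Rmult_minus_distr_l; lra).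
  apply Rmult_integral in E. destruct E as [E|E].
  { apply Rmult_integral in E. destruct E; [lra|contradiction]. }
  assert (HK : (0 < IZR K)%R) by nra.
  apply lt_0_IZR in HK. assert (HK1 : (1 <= IZR K)%R) by (apply IZR_le; lia).
  nra.
Qed.

Lemma u_nonreal L w1 w2 L' (g u : C) (m : Z) :
  Im (Cmult w2 (Cconj w1)) <> 0%R -> LB L w1 w2 ->
  (forall z, L z -> L' z) ->
  (forall z, L' z <-> exists (k : Z) (l : C), L l /\ z = Cplus l (Cmult (zc k) g)) ->
  (forall k : Z, L (Cmult (zc k) g) <-> (m | k)%Z) -> (1 < m)%Z -> u <> RtoC 0 ->
  (forall z, L' z <-> L (Cmult u z)) -> Im u <> 0%R.
Proof.
  intros HD H HLL' HL' Hg Hm Hu Hiso Hi.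
  assert (Hw1 : L (Cmult u w1)) by (apply Hiso, HLL'; eapply LB_w1; eauto).
  destruct (proj1 (H _) Hw1) as [a [b Eab]].
  assert (Eu : u = zc a).
  { rewrite (real_of_Im0 u Hi) in Eab.
    assert (E2 : Cplus (Cmult (RtoC (Re u)) w1) (Cmult (RtoC 0) w2) =
                 Cplus (Cmult (RtoC (IZR a)) w1) (Cmult (RtoC (IZR b)) w2)).
    { unfold zc in Eab. rewrite <- Eab. ring. }
    destruct (coord_uniqR _ _ _ _ _ _ HD E2) as [E3 _].
    rewrite (real_of_Im0 u Hi), E3. reflexivity. }
  subst u.
  assert (HL1 : L' (Cmult w1 (Cinv (zc a)))).
  { apply Hiso. apply (LB_eq L w1); [field; auto| eapply LB_w1; eauto]. }
  assert (HL2 : L' (Cmult w2 (Cinv (zc a)))).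
  { apply Hiso. apply (LB_eq L w2); [field; auto| eapply LB_w2; eauto]. }
  destruct (proj1 (HL' _) HL1) as [k1 [l1 [Hl1 E1]]].
  destruct (proj1 (HL' _) HL2) as [k2 [l2 [Hl2 E2]]].
  assert (Hc : L (Cminus (Cmult (zc k2) l1) (Cmult (zc k1) l2))).
  { apply (LB_sub L w1 w2); auto; apply (LB_zmul L w1 w2); auto. }
  destruct (proj1 (H _) Hc) as [c [d Ecd]].
  assert (Ecd' : Cplus (Cmult (zc k2) w1) (Cmult (zc (-k1)) w2) =
                 Cplus (Cmult (zc (a * c)) w1) (Cmult (zc (a * d)) w2)).
  { transitivity (Cmult (zc a) (Cminus (Cmult (zc k2) (Cmult w1 (Cinv (zc a)))) (Cmult (zc k1) (Cmult w2 (Cinv (zc a)))))).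
    { zcs. field. auto. }
    rewrite E1, E2.
    replace (Cminus (Cmult (zc k2) (Cplus l1 (Cmult (zc k1) g))) (Cmult (zc k1) (Cplus l2 (Cmult (zc k2) g))))
      with (Cminus (Cmult (zc k2) l1) (Cmult (zc k1) l2)) by ring.
    rewrite Ecd. zcs. ring. }
  destruct (coord_uniqZ _ _ _ _ _ _ HD Ecd') as [_ Ek1].
  assert (Hag : L (Cmult (zc a) g)).
  { apply Hiso. apply HL'. exists 1%Z, (RtoC 0). split; [eapply LB_0; eauto| rewrite zc1; ring]. }
  assert (Hz1 : L (Cmult w1 (Cinv (zc a)))).
  { rewrite E1. apply (LB_add L w1 w2); auto.
    apply (LB_eq L (Cmult (zc (-d)) (Cmult (zc a) g))); [|apply (LB_zmul L w1 w2); auto].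
    replace k1 with (- (a * d))%Z by lia. zcs. ring. }
  destruct (proj1 (H _) Hz1) as [e [f Eef]].
  assert (Eef' : Cplus (Cmult (zc 1) w1) (Cmult (zc 0) w2) =
                 Cplus (Cmult (zc (a * e)) w1) (Cmult (zc (a * f)) w2)).
  { transitivity (Cmult (zc a) (Cmult w1 (Cinv (zc a)))).
    { rewrite zc0, zc1. field. auto. }
    rewrite Eef. zcs. ring. }
  destruct (coord_uniqZ _ _ _ _ _ _ HD Eef') as [Ea _].
  assert (Hg1 : L (Cmult (zc 1) g)).
  { destruct (Z.mul_eq_1 a e (eq_sym Ea)) as [->| ->].
    - exact Hag.
    - apply (LB_eq L (Cmult (zc (- (1))) (Cmult (zc (- (1))) g))); [rewrite !zc_opp, zc1; ring|apply (LB_zmul L w1 w2); auto]. }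
  apply Hg in Hg1. apply Z.divide_pos_le in Hg1; lia.
Qed.

Lemma disc_eq (tau : C) (t n : Z) : Im tau <> 0%R -> Cmult tau tau = Cminus (Cmult (zc t) tau) (zc n) ->
  IZR (4 * n - t * t) = (4 * Im tau * Im tau)%R.
Proof.
  rewrite minus_IZR, !mult_IZR.
  destruct tau as [x y]. unfold Im, Cmult, Cminus, Cplus, Copp, zc, RtoC. simpl fst; simpl snd. intros Hy E.
  injection E as E1 E2.
  assert (Ex : (2 * x = IZR t)%R).
  { assert (y * (2 * x - IZR t) = 0)%R by lra. apply Rmult_integral in H. destruct H; [contradiction|lra]. }
  rewrite <- Ex. rewrite <- Ex in E1. nra.
Qed.

Lemma Im_comb (tau : C) (a b : Z) : Im (Cplus (zc a) (Cmult (zc b) tau)) = (IZR b * Im tau)%R.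
Proof. destruct tau as [x y]. unfold Im, Cmult, Cplus, zc, RtoC; simpl. ring. Qed.

Lemma not_sqf k : k <> 0%Z -> ~ squarefreeZ k -> exists q k', (2 <= q)%Z /\ k = (q * q * k')%Z.
Proof.
  intros Hk Hn. unfold squarefreeZ in Hn. apply not_all_ex_not in Hn as [p Hp].
  apply imply_to_and in Hp as [[k' Ek] Hp].
  exists (Z.abs p), k'.
  assert (p <> 0)%Z by (intro; subst; lia).
  destruct (Z.abs_spec p) as [[h1 h2]|[h1 h2]]; rewrite h2; split.
  - destruct (Z.eq_dec p 1); [subst; tauto|lia].
  - rewrite Ek; ring.
  - destruct (Z.eq_dec p (-1)); [subst; tauto|lia].
  - rewrite Ek; ring.
Qed.

Ltac zlia := Z.div_mod_to_equations; lia.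

Lemma fund_decomp D : (D < 0)%Z -> (D mod 4 = 0 \/ D mod 4 = 1)%Z ->
  exists f d, (0 < f)%Z /\ D = (f * f * d)%Z /\ fundamental_disc d.
Proof.
  intros HD. remember (- D)%Z as x eqn:Hx.
  assert (Hx0 : (0 <= x)%Z) by zlia. revert D Hx HD.
  pattern x. apply Z_lt_induction; [|exact Hx0]. clear x Hx0.
  intros x IH D Hx HD Hmod.
  destruct Hmod as [H0|H1].
  -
    assert (Ek : D = (4 * (D / 4))%Z) by (pose proof (Z.div_mod D 4); zlia).
    set (k := (D / 4)%Z) in *.
    assert (Hk : (k < 0)%Z) by zlia.
    destruct (classic (k mod 4 = 2 \/ k mod 4 = 3)%Z) as [Hk23|Hk01].
    + destruct (classic (squarefreeZ k)) as [Hs|Hs].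
      * exists 1%Z, D. split; [zlia|split; [ring|]]. right. exists k. auto.
      * destruct (not_sqf k ltac:(zlia) Hs) as [q [k' [Hq Ekq]]].
        destruct (Z.Even_or_Odd q) as [[r Er]|[r Er]].
        { exfalso. assert (k = 4 * (r * r * k'))%Z by (rewrite Ekq, Er; ring). zlia. }
        assert (Ekk : k = (4 * ((r * r + r) * k') + k')%Z) by (rewrite Ekq, Er; ring).
        assert (Hk' : (k' < 0)%Z) by (destruct (Z_lt_le_dec k' 0); [auto|]; exfalso; nia).
        assert (Hqq : (4 <= q*q)%Z) by nia. assert (Hb : (q*q*(-k') >= 4*(-k'))%Z) by (apply Z.le_ge; apply Z.mul_le_mono_nonneg_r; lia).
        destruct (IH (- (4 * k'))%Z) with (D := (4 * k')%Z) as [f [d [Hf [Ed Hd]]]]; try zlia.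
        exists (q * f)%Z, d. split; [nia|split; [|exact Hd]].
        rewrite Ek, Ekq. replace (4*(q*q*k'))%Z with (q*q*(4*k'))%Z by ring. rewrite Ed. ring.
    + assert (k mod 4 = 0 \/ k mod 4 = 1)%Z as Hk' by (pose proof (Z.mod_pos_bound k 4); zlia).
      destruct (IH (- k)%Z) with (D := k) as [f [d [Hf [Ed Hd]]]]; try zlia.
      exists (2 * f)%Z, d. split; [zlia|split; [|exact Hd]]. rewrite Ek, Ed. ring.
  - destruct (classic (squarefreeZ D)) as [Hs|Hs].
    + exists 1%Z, D. split; [zlia|split; [ring|]]. left. auto.
    + destruct (not_sqf D ltac:(zlia) Hs) as [q [k' [Hq Ekq]]].
      destruct (Z.Even_or_Odd q) as [[r Er]|[r Er]].
      { exfalso. assert (D = 4 * (r * r * k'))%Z by (rewrite Ekq, Er; ring). zlia. }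
      assert (Ekk : D = (4 * ((r * r + r) * k') + k')%Z) by (rewrite Ekq, Er; ring).
      assert (Hk' : (k' < 0)%Z) by (destruct (Z_lt_le_dec k' 0); [auto|]; exfalso; nia).
      assert (Hqq : (4 <= q*q)%Z) by nia. assert (Hb : (q*q*(-k') >= 4*(-k'))%Z) by (apply Z.le_ge; apply Z.mul_le_mono_nonneg_r; lia).
      destruct (IH (- k')%Z) with (D := k') as [f [d [Hf [Ed Hd]]]]; try zlia.
      exists (q * f)%Z, d. split; [nia|split; [|exact Hd]].
      rewrite Ekq, Ed. ring.
Qed.

Definition ev (w : C) (N : Z) := Cmult w (Cinv (zc N)).

Lemma e_div L w1 w2 N p q : Im (Cmult w2 (Cconj w1)) <> 0%R -> LB L w1 w2 -> zc N <> RtoC 0 ->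
  L (Cplus (Cmult (zc p) (ev w1 N)) (Cmult (zc q) (ev w2 N))) -> (N | p)%Z /\ (N | q)%Z.
Proof.
  intros HD H HN HL. destruct (proj1 (H _) HL) as [a [b E]].
  assert (E' : Cplus (Cmult (zc p) w1) (Cmult (zc q) w2) = Cplus (Cmult (zc (a * N)) w1) (Cmult (zc (b * N)) w2)).
  { transitivity (Cmult (zc N) (Cplus (Cmult (zc p) (ev w1 N)) (Cmult (zc q) (ev w2 N)))).
    { unfold ev. field. auto. }
    rewrite E. zcs. ring. }
  destruct (coord_uniqZ _ _ _ _ _ _ HD E') as [-> ->]. split; apply Z.divide_factor_r.
Qed.

Lemma e_of_div L w1 w2 N p q : LB L w1 w2 -> zc N <> RtoC 0 -> (N | p)%Z -> (N | q)%Z ->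
  L (Cplus (Cmult (zc p) (ev w1 N)) (Cmult (zc q) (ev w2 N))).
Proof.
  intros H HN [a ->] [b ->]. apply H. exists a, b. unfold ev. zcs. field. auto.
Qed.

Lemma ntors_dec L w1 w2 N z : LB L w1 w2 -> zc N <> RtoC 0 -> Ntors L N z ->
  exists p q, z = Cplus (Cmult (zc p) (ev w1 N)) (Cmult (zc q) (ev w2 N)).
Proof.
  intros H HN Hz. destruct (proj1 (H _) Hz) as [p [q E]]. exists p, q.
  transitivity (Cmult (Cmult (zc N) z) (Cinv (zc N))); [field; auto|].
  rewrite E. unfold ev. field. auto.
Qed.

Lemma cg_coords L w1 w2 N X Y p q p' q' : Im (Cmult w2 (Cconj w1)) <> 0%R -> LB L w1 w2 -> zc N <> RtoC 0 ->
  congr L X Y -> X = Cplus (Cmult (zc p) (ev w1 N)) (Cmult (zc q) (ev w2 N)) ->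
  Y = Cplus (Cmult (zc p') (ev w1 N)) (Cmult (zc q') (ev w2 N)) ->
  (N | p - p')%Z /\ (N | q - q')%Z.
Proof.
  intros HD H HN HC -> ->. apply (e_div L w1 w2); auto.
  unfold congr in HC. eapply LB_eq; [|exact HC]. zcs. ring.
Qed.

Lemma ev_N w N : zc N <> RtoC 0 -> Cmult (zc N) (ev w N) = w.
Proof. intros HN. unfold ev. field. auto. Qed.

Theorem lemma4p9 (N m eps : Z) (L : C -> Prop) (phi : C -> C) :
  prime N ->
  (1 < m)%Z ->
  Z.gcd m N = 1%Z ->
  (4 * m < N * N)%Z ->
  nonsquare_mod eps N ->
  ns_pair L N eps phi ->
  in_support_diag_Hecke L N m phi ->
  heegner L N phi.
Proof.
  intros HN Hm Hgcd Hbound Heps [HLat [HEnd Hsq]] Hsupp.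
  destruct HLat as [w1 [w2 [HD H]]]. fold (LB L w1 w2) in H.
  destruct Hsupp as [L' [phi' [HL'lat [[HLL' [g [HL'g Hg]]] [HEnd' [Hphi' [u [Hu0 [HuL HuPhi]]]]]]]]].
  assert (HuE : End_lat L u) by (intros z Hz; apply HuL, HLL', Hz).
  assert (Hmg : L (Cmult (zc m) g)) by (apply Hg; apply Z.divide_refl).
  pose proof (norm_bound L w1 w2 L' g u m HD H HL'g Hmg ltac:(lia) Hu0 HuL) as Hnorm.
  pose proof (u_nonreal L w1 w2 L' g u m HD H HLL' HL'g Hg Hm Hu0 HuL) as Hiu.
  destruct (end_structure L w1 w2 u HD H HuE Hiu) as [tau [t [n [Hitau [Etau Hchar]]]]].
  pose proof (disc_eq tau t n Hitau Etau) as Hdisc.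
  assert (Hpos : (0 < 4 * n - t * t)%Z).
  { apply lt_0_IZR. rewrite Hdisc. assert (0 < Im tau * Im tau)%R by (apply Rsqr_pos_lt; auto). lra. }
  assert (Hlb : forall v, End_lat L v -> Im v <> 0%R -> (Im tau * Im tau <= Im v * Im v)%R).
  { intros v Hv Hiv. destruct (proj1 (Hchar v) Hv) as [a [b ->]]. rewrite Im_comb in *.
    assert (b <> 0%Z) by (intro; subst; apply Hiv; simpl; ring).
    assert (1 <= IZR b * IZR b)%R by (rewrite <- mult_IZR; apply IZR_le; nia).
    assert (0 <= Im tau * Im tau)%R by nra. nra. }
  assert (HN1 : (1 < N)%Z) by (destruct HN; auto).
  assert (Hbr : (4 * IZR m < IZR N * IZR N)%R).
  { rewrite <- mult_IZR. change 4%R with (IZR 4). rewrite <- mult_IZR. apply IZR_lt. lia. }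
  assert (Hiu2 : (Im tau * Im tau <= Im u * Im u)%R) by (apply Hlb; auto).
  assert (Hre2 : (0 <= Re u * Re u)%R) by nra.
  split.
  -
    assert (HDneg : (t * t - 4 * n < 0)%Z) by lia.
    assert (Hmod : ((t * t - 4 * n) mod 4 = 0 \/ (t * t - 4 * n) mod 4 = 1)%Z).
    { destruct (Z.Even_or_Odd t) as [[r ->]|[r ->]].
      - left. replace ((2 * r) * (2 * r) - 4 * n)%Z with ((r * r - n) * 4)%Z by ring. apply Z_mod_mult.
      - right. replace ((2 * r + 1) * (2 * r + 1) - 4 * n)%Z with (1 + (r * r + r - n) * 4)%Z by ring.
        rewrite Z_mod_plus_full. reflexivity. }
    destruct (fund_decomp _ HDneg Hmod) as [f [d [Hf [Ed Hd]]]].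
    exists f. split.
    + apply Zgcd_1_rel_prime. apply rel_prime_sym. apply prime_rel_prime; auto.
      intros [f' Ef']. subst f.
      assert (Hd0 : (d < 0)%Z) by (destruct (Z_lt_le_dec d 0); [auto|]; exfalso; nia).
      assert (HZ : (N * N <= 4 * n - t * t)%Z).
      { assert (1 <= f' * f')%Z by nia. nia. }
      apply IZR_le in HZ. rewrite Hdisc, mult_IZR in HZ. nra.
    + split; [exact Hf|]. exists tau, t, n, d. repeat split; auto.
      * intros Hz; apply Hchar; auto.
      * intros Hz; apply Hchar; auto.
  -
    assert (HNz : zc N <> RtoC 0).
    { unfold zc, RtoC. intro E. injection E as E. apply eq_IZR_R0 in E. lia. }
    assert (HN0 : N <> 0%Z) by lia.
    set (e1 := ev w1 N). set (e2 := ev w2 N).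
    assert (Te1 : Ntors L N e1) by (unfold Ntors, e1; rewrite ev_N; auto; eapply LB_w1; eauto).
    assert (Te2 : Ntors L N e2) by (unfold Ntors, e2; rewrite ev_N; auto; eapply LB_w2; eauto).
    destruct (ntors_dec L w1 w2 N (phi e1) H HNz (proj1 HEnd _ Te1)) as [pa [pc Ep1]].
    destruct (ntors_dec L w1 w2 N (phi e2) H HNz (proj1 HEnd _ Te2)) as [pb [pd Ep2]].
    fold e1 e2 in Ep1, Ep2.
    destruct (proj1 (H _) (HuE w1 (LB_w1 _ _ _ H))) as [ux [uz Eu1]].
    destruct (proj1 (H _) (HuE w2 (LB_w2 _ _ _ H))) as [uy [uw Eu2]].
    assert (Hu_lin : forall p q, Cmult u (Cplus (Cmult (zc p) e1) (Cmult (zc q) e2)) =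
       Cplus (Cmult (zc (p*ux + q*uy)) e1) (Cmult (zc (p*uz + q*uw)) e2)).
    { intros p q. transitivity (Cmult (Cplus (Cmult (zc p) (Cmult u w1)) (Cmult (zc q) (Cmult u w2))) (Cinv (zc N))).
      { unfold e1, e2, ev. field. auto. }
      rewrite Eu1, Eu2. unfold e1, e2, ev. zcs. field. auto. }
    assert (Ue1 : Cmult u e1 = Cplus (Cmult (zc ux) e1) (Cmult (zc uz) e2)).
    { transitivity (Cmult (Cmult u w1) (Cinv (zc N))); [unfold e1, ev; field; auto|].
      rewrite Eu1. unfold e1, e2, ev. field. auto. }
    assert (Ue2 : Cmult u e2 = Cplus (Cmult (zc uy) e1) (Cmult (zc uw) e2)).
    { transitivity (Cmult (Cmult u w2) (Cinv (zc N))); [unfold e2, ev; field; auto|].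
      rewrite Eu2. unfold e1, e2, ev. field. auto. }
    assert (Hlin : forall p q, congr L (phi (Cplus (Cmult (zc p) e1) (Cmult (zc q) e2)))
       (Cplus (Cmult (zc (p*pa + q*pb)) e1) (Cmult (zc (p*pc + q*pd)) e2))).
    { intros p q. eapply cg_trans; [exact H| apply (phi_lin2 L w1 w2 N); auto|].
      apply (cg_eq L w1 w2); auto. rewrite Ep1, Ep2. zcs. ring. }
    assert (Hcomm : forall z, Ntors L N z -> congr L (Cmult u (phi z)) (phi (Cmult u z))).
    { intros z Hz.
      assert (A1 := HuPhi z ltac:(unfold Ntors in *; apply HLL'; exact Hz)).
      assert (A2 : congr L (Cmult u (phi' z)) (Cmult u (phi z))).
      { unfold congr. apply (LB_eq L (Cmult u (Cminus (phi' z) (phi z)))); [ring|].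
        apply HuL. exact (Hphi' z Hz). }
      exact (cg_trans _ _ _ _ _ _ H (cg_sym _ _ _ _ _ H A2) A1). }
    assert (K1 : (N | (pa*ux + pc*uy) - (ux*pa + uz*pb))%Z).
    { assert (C1 := Hcomm e1 Te1). rewrite Ue1, Ep1, Hu_lin in C1.
      assert (C2 := cg_trans _ _ _ _ _ _ H C1 (Hlin ux uz)).
      exact (proj1 (cg_coords L w1 w2 N _ _ _ _ _ _ HD H HNz C2 eq_refl eq_refl)). }
    assert (K2 : (N | (pb*ux + pd*uy) - (uy*pa + uw*pb))%Z).
    { assert (C1 := Hcomm e2 Te2). rewrite Ue2, Ep2, Hu_lin in C1.
      assert (C2 := cg_trans _ _ _ _ _ _ H C1 (Hlin uy uw)).
      exact (proj1 (cg_coords L w1 w2 N _ _ _ _ _ _ HD H HNz C2 eq_refl eq_refl)). }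
    assert (K3 : (N | (pa*pa + pc*pb) - eps)%Z).
    { assert (C1 := Hsq e1 Te1). rewrite Ep1 in C1.
      assert (C2 := cg_trans _ _ _ _ _ _ H (cg_sym _ _ _ _ _ H (Hlin pa pc)) C1).
      assert (E3 : Cmult (zc eps) e1 = Cplus (Cmult (zc eps) e1) (Cmult (zc 0) e2)) by (rewrite zc0; ring).
      exact (proj1 (cg_coords L w1 w2 N _ _ _ _ _ _ HD H HNz C2 eq_refl E3)). }
    destruct K1 as [k1 K1]. destruct K2 as [k2 K2]. destruct K3 as [k3 K3].
    destruct (Zdivide_dec N uy) as [[s Huy]|Huy].
    + exfalso.
      assert (Hpb : ~ (N | pb)%Z).
      { intros [s' Es]. apply Heps. exists pa. apply Z.mod_divide; auto.
        exists (k3 - pc * s')%Z. rewrite Es in K3. lia. }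
      assert (Hz : (N | uz)%Z).
      { destruct (prime_mult N HN uz pb) as [h|h]; [|exact h|contradiction].
        exists (pc * s - k1)%Z. rewrite Huy in K1. lia. }
      assert (Hxw : (N | ux - uw)%Z).
      { destruct (prime_mult N HN pb (ux - uw)) as [h|h]; [|contradiction|exact h].
        exists (k2 - pd * s + s * pa)%Z. rewrite Huy in K2. lia. }
      destruct Hz as [s1 Hs1]. destruct Hxw as [s2 Hs2].
      set (vv := Cmult (Cminus u (zc ux)) (Cinv (zc N))).
      assert (Hvv : End_lat L vv).
      { apply (End_of_basis L w1 w2); auto.
        - apply (LB_eq L (Cplus (Cmult (zc 0) w1) (Cmult (zc s1) w2))); [|apply H; eauto].
          unfold vv. transitivity (Cmult (Cminus (Cmult u w1) (Cmult (zc ux) w1)) (Cinv (zc N))); [|field; auto].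
          rewrite Eu1, Hs1. zcs. rewrite zc0. field. auto.
        - apply (LB_eq L (Cplus (Cmult (zc s) w1) (Cmult (zc (-s2)) w2))); [|apply H; eauto].
          unfold vv. transitivity (Cmult (Cminus (Cmult u w2) (Cmult (zc ux) w2)) (Cinv (zc N))); [|field; auto].
          rewrite Eu2, Huy. replace uw with (ux - s2 * N)%Z by lia. zcs. field. auto. }
      assert (Euv : u = Cplus (zc ux) (Cmult (zc N) vv)) by (unfold vv; field; auto).
      assert (Hiv : Im u = (IZR N * Im vv)%R) by (rewrite Euv at 1; apply Im_comb).
      assert (Hivv : Im vv <> 0%R) by (intro h; apply Hiu; rewrite Hiv, h; ring).
      assert (Hl := Hlb vv Hvv Hivv).
      assert (H41 : (1 <= IZR (4 * n - t * t))%R) by (apply IZR_le; lia).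
      rewrite Hdisc in H41.
      assert (Hu2 : (Im u * Im u = IZR N * IZR N * (Im vv * Im vv))%R) by (rewrite Hiv; ring).
      assert (HNr : (1 <= IZR N)%R) by (apply IZR_le; lia).
      assert (0 <= Im vv * Im vv)%R by nra.
      assert (IZR N * IZR N * (1/4) <= IZR N * IZR N * (Im vv * Im vv))%R.
      { apply Rmult_le_compat_l; nra. }
      nra.
    + destruct (rel_prime_bezout _ _ (prime_rel_prime N HN uy Huy)) as [u0 v Bez].
      set (lam := (pb * v)%Z). set (mu := (pa - pb * v * ux)%Z).
      exists (Cplus (zc mu) (Cmult (zc lam) u)). split.
      { apply (End_add L w1 w2); auto; [eapply End_zc; eauto|]. apply End_mul; auto. eapply End_zc; eauto. }
      intros z Hz. destruct (ntors_dec L w1 w2 N z H HNz Hz) as [p [q Ez]]. fold e1 e2 in Ez. subst z.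
      eapply cg_trans; [exact H| apply Hlin|].
      assert (Ea : Cmult (Cplus (zc mu) (Cmult (zc lam) u)) (Cplus (Cmult (zc p) e1) (Cmult (zc q) e2)) =
        Cplus (Cmult (zc (mu * p + lam * (p*ux + q*uy))) e1) (Cmult (zc (mu * q + lam * (p*uz + q*uw))) e2)).
      { transitivity (Cplus (Cmult (zc mu) (Cplus (Cmult (zc p) e1) (Cmult (zc q) e2)))
                            (Cmult (zc lam) (Cmult u (Cplus (Cmult (zc p) e1) (Cmult (zc q) e2))))); [ring|].
        rewrite Hu_lin. zcs. ring. }
      rewrite Ea. unfold congr.
      apply (LB_eq L (Cplus (Cmult (zc ((p*pa + q*pb) - (mu * p + lam * (p*ux + q*uy)))) e1)
                            (Cmult (zc ((p*pc + q*pd) - (mu * q + lam * (p*uz + q*uw)))) e2))); [zcs; ring|].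
      apply (e_of_div L w1 w2); auto.
      * exists (q * pb * u0)%Z.
        assert (Hc : ((p*pa + q*pb) - (mu * p + lam * (p*ux + q*uy)) - q * pb * u0 * N =
                      q * pb * (1 - (u0 * N + v * uy)))%Z) by (unfold mu, lam; ring).
        rewrite Bez in Hc. lia.
      * exists (p * (pc * u0 + v * k1) + q * ((pd - pa) * u0 + v * k2))%Z.
        assert (Hc : ((p*pc + q*pd) - (mu * q + lam * (p*uz + q*uw)) -
                      (p * (pc * u0 + v * k1) + q * ((pd - pa) * u0 + v * k2)) * N =
          p * (pc * (1 - (u0 * N + v * uy)) + v * ((pa*ux + pc*uy) - (ux*pa + uz*pb) - k1 * N)) +
          q * ((pd - pa) * (1 - (u0 * N + v * uy)) + v * ((pb*ux + pd*uy) - (uy*pa + uw*pb) - k2 * N)))%Z)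
          by (unfold mu, lam; ring).
        rewrite Bez, K1, K2 in Hc. lia.
Qed.
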